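(* Let $L$ be a positive integer and $U$ a real number with $L > \frac{8}{U}$. Consider, for real $\Lambda$, the equation $$\sin q - \Lambda = \frac{U}{4}\cot\left(\frac{qL}{2}\right)$$ for $q\in[0,2\pi)$. This equation has exactly $L$ branches of solutions $q_\ell(\Lambda)$, $\ell=1,\dots,L$ (real-valued functions of $\Lambda\in\mathbb{R}$), with the properties (i) $(\ell-1)\frac{2\pi}{L} \le q_\ell(\Lambda) \le \ell\frac{2\pi}{L}$; (ii) $\frac{d q_\ell(\Lambda)}{d\Lambda} > 0$; (iii) $\lim_{\Lambda\to-\infty} q_\ell(\Lambda) = (\ell-1)\frac{2\pi}{L}$ and $\lim_{\Lambda\to\infty} q_\ell(\Lambda) = \ell\frac{2\pi}{L}$.
   Context: The inequality $L>8/U$ is called the Takahashi condition. A branch of solutions means a function $\Lambda\mapsto q(\Lambda)$ with $q(\Lambda)\in[0,2\pi)$ satisfying the equation for every real $\Lambda$. *)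

(* Defs.v *)
From Stdlib Require Import Reals Lra.
From Coquelicot Require Import Coquelicot.
Open Scope R_scope.

Definition cot (x : R) : R := cos x / sin x.

Definition is_solution (L : nat) (U Lam q : R) : Prop :=
  0 <= q < 2 * PI /\
  sin (q * INR L / 2) <> 0 /\
  sin q - Lam = U / 4 * cot (q * INR L / 2).

Definition is_branch (L : nat) (U : R) (q : R -> R) : Prop :=
  forall Lam : R, is_solution L U Lam (q Lam).

(* Main.v *)
Require Import Defs.
From Stdlib Require Import Reals Lra Lia Ranalysis5 ClassicalEpsilon ZArith.
From Coquelicot Require Import Coquelicot.
Open Scope R_scope.

Definition Fq (L:nat) (U q:R) := sin q - U/4 * cot (q * INR L / 2).
Definition dFq (L:nat) (U q:R) := cos q + U * INR L / 8 / (sin (q * INR L / 2))^2.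
Definition aL (L l : nat) := (INR l - 1) * (2 * PI / INR L).
Definition bL (L l : nat) := INR l * (2 * PI / INR L).

Lemma Fq_deriv L U x : sin (x * INR L / 2) <> 0 -> derivable_pt_lim (Fq L U) x (dFq L U x).
Proof.
intros H. apply is_derive_Reals. unfold Fq, dFq, cot. auto_derive.
- exact H.
- unfold Rdiv in *. set (s := sin (x * INR L * / 2)) in *. set (c := cos (x * INR L * /2)).
  assert (Hc: c^2 = 1 - s^2). { unfold s, c. rewrite <- (sin2_cos2 (x * INR L * /2)). unfold Rsqr. ring. }
  field_simplify; [| exact H ..]. rewrite Hc. field. exact H.
Qed.

Lemma dFq_pos L U x : 8 < U * INR L -> sin (x * INR L / 2) <> 0 -> 0 < dFq L U x.
Proof.
intros HUL H. unfold dFq. set (s := sin (x * INR L / 2)) in *.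
assert (Hs1 : -1 <= s <= 1) by apply SIN_bound.
assert (Hs2 : 0 < s^2) by (apply pow2_gt_0; exact H).
assert (Hs3 : s^2 <= 1) by nra.
assert (E : U * INR L / 8 / s ^ 2 - 1 = (U * INR L - 8 * s^2) / (8 * s^2)) by (field; lra).
assert (0 < (U * INR L - 8 * s^2) / (8 * s^2)) by (apply Rdiv_lt_0_compat; nra).
pose proof (COS_bound x). lra.
Qed.

Lemma sin_nz L l x : 0 < INR L -> aL L l < x < bL L l -> sin (x * INR L / 2) <> 0.
Proof.
intros HL [H1 H2] Hs. destruct (sin_eq_0_0 _ Hs) as [k Hk].
assert (E1 : x * INR L / 2 - (INR l - 1) * PI = (x - aL L l) * (INR L / 2)) by (unfold aL; field; lra).
assert (E2 : INR l * PI - x * INR L / 2 = (bL L l - x) * (INR L / 2)) by (unfold bL; field; lra).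
assert (P1 : 0 < (x - aL L l) * (INR L / 2)) by (apply Rmult_lt_0_compat; lra).
assert (P2 : 0 < (bL L l - x) * (INR L / 2)) by (apply Rmult_lt_0_compat; lra).
rewrite Hk in E1, E2. rewrite INR_IZR_INZ in E1, E2.
pose proof PI_RGT_0.
assert (A1 : IZR (Z.of_nat l) - 1 < IZR k).
{ apply (Rmult_lt_reg_r PI); [lra|]. lra. }
assert (A2 : IZR k < IZR (Z.of_nat l)).
{ apply (Rmult_lt_reg_r PI); [lra|]. lra. }
rewrite <- minus_IZR in A1. apply lt_IZR in A1. apply lt_IZR in A2. lia.
Qed.

Lemma grid_a L l : 0 < INR L -> sin (aL L l * INR L / 2) = 0.
Proof.
intros HL. apply sin_eq_0_1. exists (Z.of_nat l - 1)%Z.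
rewrite minus_IZR, <- INR_IZR_INZ. unfold aL. field. lra.
Qed.

Lemma grid_b L l : 0 < INR L -> sin (bL L l * INR L / 2) = 0.
Proof.
intros HL. apply sin_eq_0_1. exists (Z.of_nat l).
rewrite <- INR_IZR_INZ. unfold bL. field. lra.
Qed.

Lemma Fq_incr L U l x y : 0 < INR L -> 8 < U * INR L ->
  aL L l < x -> x < y -> y < bL L l -> Fq L U x < Fq L U y.
Proof.
intros HL HUL H1 H2 H3.
destruct (MVT_cor2 (Fq L U) (dFq L U) x y H2) as [c [Hc1 Hc2]].
- intros c Hc. apply Fq_deriv. apply (sin_nz L l). exact HL. lra.
- assert (0 < dFq L U c). { apply dFq_pos; auto. apply (sin_nz L l); auto; lra. }
  nra.
Qed.

Lemma Fq_uniq L U l x y : 0 < INR L -> 8 < U * INR L ->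
  aL L l < x < bL L l -> aL L l < y < bL L l -> Fq L U x = Fq L U y -> x = y.
Proof.
intros HL HUL Hx Hy E.
destruct (Rtotal_order x y) as [H|[H|H]]; auto.
- pose proof (Fq_incr L U l x y HL HUL ltac:(lra) H ltac:(lra)). lra.
- pose proof (Fq_incr L U l y x HL HUL ltac:(lra) H ltac:(lra)). lra.
Qed.

Lemma cot_shift k t : cot (t + INR k * PI) = cot t.
Proof.
induction k as [|k IH].
- simpl. rewrite Rmult_0_l, Rplus_0_r. reflexivity.
- rewrite S_INR. replace (t + (INR k + 1) * PI) with ((t + INR k * PI) + PI) by ring.
  unfold cot in *. rewrite neg_sin, neg_cos. rewrite <- IH. unfold Rdiv. rewrite Rinv_opp. ring.
Qed.

Lemma cot_PI_minus t : cot (PI - t) = - cot t.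
Proof. unfold cot. rewrite Rtrigo_facts.cos_pi_minus, sin_PI_x. unfold Rdiv. ring. Qed.

Lemma cot_small t : 0 < t <= 1 -> 1 <= 2 * t * cot t.
Proof.
intros [H1 H2].
pose proof PI2_1.
assert (Hs : 0 < sin t) by (apply sin_gt_0; lra).
assert (Hst : sin t < t) by (apply sin_lt_x; lra).
assert (Hh1 : 0 <= sin (t/2)) by (apply sin_ge_0; lra).
assert (Hh2 : sin (t/2) < t/2) by (apply sin_lt_x; lra).
assert (Hc : cos t = 1 - 2 * sin (t/2) * sin (t/2)).
{ replace t with (2 * (t/2)) at 1 by field. apply cos_2a_sin. }
assert (Hc2 : 1/2 <= cos t) by nra.
unfold cot.
assert (E : 2 * t * (cos t / sin t) - 1 = (2 * t * cos t - sin t) / sin t) by (field; lra).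
assert (0 <= (2 * t * cos t - sin t) / sin t) by (apply Rdiv_le_0_compat; nra).
lra.
Qed.

Lemma Fq_cont L U l x : 0 < INR L -> aL L l < x < bL L l -> continuity_pt (Fq L U) x.
Proof.
intros HL Hx. apply derivable_continuous_pt. exists (dFq L U x).
apply Fq_deriv. apply (sin_nz L l); auto.
Qed.

Lemma ex_root L U l Lam : 0 < INR L -> 8 < U * INR L -> 0 < U -> (1 <= l)%nat ->
  exists x, aL L l < x < bL L l /\ Fq L U x = Lam.
Proof.
intros HL HUL HU Hl.
pose proof PI2_1.
set (t := Rmin 1 (U / (8 * (Rabs Lam + 2)))).
assert (HA : 0 <= Rabs Lam) by apply Rabs_pos.
assert (HLam := Rle_abs Lam). assert (HLam2 := Rle_abs (-Lam)). rewrite Rabs_Ropp in HLam2.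
assert (Ht0 : 0 < t). { unfold t. apply Rmin_glb_lt. lra. apply Rdiv_lt_0_compat; lra. }
assert (Ht1 : t <= 1) by apply Rmin_l.
assert (Ht2 : t <= U / (8 * (Rabs Lam + 2))) by apply Rmin_r.
assert (Ht3 : t * (8 * (Rabs Lam + 2)) <= U).
{ apply (Rmult_le_compat_r (8 * (Rabs Lam + 2))) in Ht2; [|lra].
  replace (U / (8 * (Rabs Lam + 2)) * (8 * (Rabs Lam + 2))) with U in Ht2 by (field; lra). exact Ht2. }
assert (Hcot := cot_small t (conj Ht0 Ht1)).
assert (Hbig : Rabs Lam + 2 <= U / 4 * cot t).
{ apply (Rmult_le_reg_r (8 * t)); [lra|]. nra. }
destruct l as [|k]; [lia|].
set (q1 := aL L (S k) + 2 * t / INR L).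
set (q2 := bL L (S k) - 2 * t / INR L).
assert (E1 : q1 * INR L / 2 = t + INR k * PI) by (unfold q1, aL; rewrite S_INR; field; lra).
assert (E2 : q2 * INR L / 2 = (PI - t) + INR k * PI) by (unfold q2, bL; rewrite S_INR; field; lra).
assert (F1 : Fq L U q1 - Lam < 0).
{ unfold Fq. rewrite E1, cot_shift. pose proof (SIN_bound q1). lra. }
assert (F2 : 0 < Fq L U q2 - Lam).
{ unfold Fq. rewrite E2, cot_shift, cot_PI_minus. pose proof (SIN_bound q2). lra. }
assert (P1 : 0 < 2 * t / INR L) by (apply Rdiv_lt_0_compat; lra).
assert (Hab : bL L (S k) - aL L (S k) = 2 * PI / INR L) by (unfold aL, bL; field; lra).
assert (P2 : 4 * t / INR L < 2 * PI / INR L).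
{ unfold Rdiv. apply Rmult_lt_compat_r. apply Rinv_0_lt_compat; lra. lra. }
assert (Hq12 : q1 < q2) by (unfold q1, q2; lra).
destruct (IVT_interv (fun x => Fq L U x - Lam) q1 q2) as [z [Hz1 Hz2]]; auto.
- intros a Ha. apply (continuity_pt_minus (Fq L U) (fct_cte Lam)).
  + apply (Fq_cont L U (S k)); auto. unfold q1, q2 in Ha; lra.
  + apply continuity_pt_const. intros u v. reflexivity.
- exists z. split. unfold q1, q2 in Hz1; lra. lra.
Qed.

Lemma bL_aL L l l' : 0 < INR L -> (l < l')%nat -> bL L l <= aL L l'.
Proof.
intros HL H. assert (H1 : INR (S l) <= INR l') by (apply le_INR; lia). rewrite S_INR in H1.
assert (Hc : 0 < 2 * PI / INR L) by (apply Rdiv_lt_0_compat; [pose proof PI_RGT_0|]; lra).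
unfold aL, bL. nra.
Qed.

Theorem mainTheorem1 (L : nat) (U : R)
  (hL : (0 < L)%nat) (hU : 0 < U) (hT : 8 / U < INR L) :
  exists q : nat -> R -> R,
    (forall l, (1 <= l <= L)%nat -> is_branch L U (q l)) /\
    (forall Lam x, is_solution L U Lam x ->
       exists l, (1 <= l <= L)%nat /\ x = q l Lam) /\
    (forall Lam l l', (1 <= l <= L)%nat -> (1 <= l' <= L)%nat -> l <> l' ->
       q l Lam <> q l' Lam) /\
    (forall p : R -> R, is_branch L U p -> continuity p ->
       exists l, (1 <= l <= L)%nat /\ forall Lam, p Lam = q l Lam) /\
    (forall l, (1 <= l <= L)%nat ->
       (forall Lam, (INR l - 1) * (2 * PI / INR L) <= q l Lam <= INR l * (2 * PI / INR L)) /\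
       (forall Lam, exists d, derivable_pt_lim (q l) Lam d /\ 0 < d) /\
       is_lim (q l) m_infty (Finite ((INR l - 1) * (2 * PI / INR L))) /\
       is_lim (q l) p_infty (Finite (INR l * (2 * PI / INR L)))).
Proof.
assert (HL : 0 < INR L) by (apply lt_0_INR; lia).
assert (HUL : 8 < U * INR L).
{ apply (Rmult_lt_compat_l U) in hT; [|lra]. replace (U * (8 / U)) with 8 in hT by (field; lra). lra. }
pose proof PI_RGT_0 as HPI.
assert (Hc : 0 < 2 * PI / INR L) by (apply Rdiv_lt_0_compat; lra).
assert (Hex : forall l Lam, exists x, aL L (Nat.max l 1) < x < bL L (Nat.max l 1) /\ Fq L U x = Lam)
  by (intros; apply ex_root; auto; lia).
set (q := fun l Lam => proj1_sig (constructive_indefinite_description _ (Hex l Lam))).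
assert (Hq : forall l Lam, (1 <= l <= L)%nat -> aL L l < q l Lam < bL L l /\ Fq L U (q l Lam) = Lam).
{ intros l Lam Hl. unfold q. destruct (constructive_indefinite_description _ _) as [x Hx]. simpl.
  rewrite (Nat.max_l l 1) in Hx by lia. exact Hx. }
clearbody q.
assert (Hsol : forall Lam x, is_solution L U Lam x <->
   0 <= x < 2*PI /\ sin (x*INR L/2) <> 0 /\ Fq L U x = Lam).
{ intros Lam x. unfold is_solution, Fq. split; intros [A [B C]]; repeat split; auto; lra. }
assert (Hrng : forall l, (1<=l<=L)%nat -> 0 <= aL L l /\ bL L l <= 2*PI).
{ intros l Hl. assert (H1 : INR 1 <= INR l) by (apply le_INR; lia).
  assert (H2 : INR l <= INR L) by (apply le_INR; lia). simpl in H1.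
  assert (E : 2 * PI - bL L l = (INR L - INR l) * (2 * PI / INR L)) by (unfold bL; field; lra).
  unfold aL. split; nra. }
assert (Hlo : forall l Lam z, (1<=l<=L)%nat -> aL L l < z < bL L l -> Fq L U z <= Lam -> z <= q l Lam).
{ intros l Lam z Hl Hz HF. destruct (Rle_lt_dec z (q l Lam)) as [H|H]; auto.
  destruct (Hq l Lam Hl) as [H1 H2].
  pose proof (Fq_incr L U l (q l Lam) z HL HUL ltac:(lra) H ltac:(lra)). lra. }
assert (Hhi : forall l Lam z, (1<=l<=L)%nat -> aL L l < z < bL L l -> Lam <= Fq L U z -> q l Lam <= z).
{ intros l Lam z Hl Hz HF. destruct (Rle_lt_dec (q l Lam) z) as [H|H]; auto.
  destruct (Hq l Lam Hl) as [H1 H2].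
  pose proof (Fq_incr L U l z (q l Lam) HL HUL ltac:(lra) H ltac:(lra)). lra. }
assert (Hcomp : forall Lam x, is_solution L U Lam x -> exists l, (1 <= l <= L)%nat /\ x = q l Lam).
{ intros Lam x Hx. apply Hsol in Hx. destruct Hx as [[H0 H2] [Hs HF]].
  set (y := x * INR L / (2*PI)).
  assert (Exy : x = y * (2*PI/INR L)) by (unfold y; field; lra).
  assert (Hy0 : 0 <= y) by nra.
  assert (Hy1 : y < INR L).
  { apply (Rmult_lt_reg_r (2*PI/INR L)); [lra|]. replace (INR L * (2 * PI / INR L)) with (2*PI) by (field; lra). lra. }
  destruct (archimed y) as [A1 A2].
  set (n := up y) in *.
  assert (Hn0 : (0 < n)%Z) by (apply lt_IZR; lra).
  assert (HnL : (n < Z.of_nat L + 1)%Z).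
  { apply lt_IZR. rewrite plus_IZR, <- INR_IZR_INZ. lra. }
  assert (Hn : INR (Z.to_nat n) = IZR n) by (rewrite INR_IZR_INZ, Z2Nat.id; [reflexivity|lia]).
  assert (Hl : (1 <= Z.to_nat n <= L)%nat) by lia.
  exists (Z.to_nat n). split; auto.
  assert (Ha : aL L (Z.to_nat n) <= x).
  { unfold aL. rewrite Hn, Exy. apply Rmult_le_compat_r; lra. }
  assert (Hb : x < bL L (Z.to_nat n)).
  { unfold bL. rewrite Hn, Exy. apply Rmult_lt_compat_r; lra. }
  assert (Ha' : aL L (Z.to_nat n) < x).
  { destruct Ha as [Ha|Ha]; auto. exfalso. apply Hs. rewrite <- Ha. apply grid_a; auto. }
  destruct (Hq (Z.to_nat n) Lam Hl) as [Hq1 Hq2].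
  apply (Fq_uniq L U (Z.to_nat n)); auto. lra. }
assert (Hmono : forall l L1 L2, (1<=l<=L)%nat -> L1 <= L2 -> q l L1 <= q l L2).
{ intros l L1 L2 Hl H. apply Hlo; auto. apply Hq; auto. destruct (Hq l L1 Hl). lra. }
exists q. split; [|split; [|split; [|split]]].
- intros l Hl Lam. apply Hsol. destruct (Hq l Lam Hl) as [H1 H2]. destruct (Hrng l Hl).
  split; [lra|]. split; auto. apply (sin_nz L l); auto.
- exact Hcomp.
- intros Lam l l' Hl Hl' Hne E.
  destruct (Hq l Lam Hl) as [H1 _]. destruct (Hq l' Lam Hl') as [H2 _].
  assert (l < l' \/ l' < l)%nat as [H|H] by lia.
  + pose proof (bL_aL L l l' HL H). lra.
  + pose proof (bL_aL L l' l HL H). lra.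
- intros p Hp Hpc.
  destruct (Hcomp 0 (p 0) (Hp 0)) as [l0 [Hl0 E0]].
  destruct (Hq l0 0 Hl0) as [Hq0 _]. rewrite <- E0 in Hq0.
  assert (Hin : forall Lam, aL L l0 < p Lam < bL L l0).
  { intros Lam.
    destruct (Rlt_le_dec (aL L l0) (p Lam)) as [Ha|Ha].
    - destruct (Rlt_le_dec (p Lam) (bL L l0)) as [Hb|Hb]; [lra|].
      destruct (IVT_gen p 0 Lam (bL L l0) Hpc) as [c [_ Hc']].
      { unfold Rmin, Rmax; destruct (Rle_dec _ _); lra. }
      exfalso. destruct (Hp c) as [_ [Hs _]]. apply Hs. rewrite Hc'. apply grid_b; auto.
    - destruct (IVT_gen p 0 Lam (aL L l0) Hpc) as [c [_ Hc']].
      { unfold Rmin, Rmax; destruct (Rle_dec _ _); lra. }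
      exfalso. destruct (Hp c) as [_ [Hs _]]. apply Hs. rewrite Hc'. apply grid_a; auto. }
  exists l0. split; auto. intros Lam.
  destruct (Hq l0 Lam Hl0) as [H1 H2].
  apply (Fq_uniq L U l0); auto. rewrite H2. apply (proj1 (Hsol Lam (p Lam)) (Hp Lam)).
- intros l Hl. split; [|split; [|split]].
  + intros Lam. destruct (Hq l Lam Hl) as [H1 _]. unfold aL, bL in H1. lra.
  + intros Lam. set (q0 := q l Lam). destruct (Hq l Lam Hl) as [Hq0 HF0]. fold q0 in Hq0, HF0.
    set (eps := Rmin ((q0 - aL L l)/2) ((bL L l - q0)/2)).
    assert (He0 : 0 < eps) by (unfold eps; apply Rmin_glb_lt; lra).
    assert (He1 : eps <= (q0 - aL L l)/2) by apply Rmin_l.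
    assert (He2 : eps <= (bL L l - q0)/2) by apply Rmin_r.
    assert (Hcont : continuity_pt (q l) Lam).
    { assert (Hlu : q0 - eps < q0 + eps) by lra.
      apply (continuity_pt_recip_interv (Fq L U) (q l) (q0 - eps) (q0 + eps) Hlu).
      - intros x y H1 H2 H3. apply (Fq_incr L U l); lra.
      - intros x _ _. unfold comp, id. apply Hq; auto.
      - intros x H1 H2. split.
        + apply Hlo; auto. lra.
        + apply Hhi; auto. lra.
      - intros a Ha. apply (Fq_cont L U l); auto. lra.
      - split.
        + pose proof (Fq_incr L U l (q0 - eps) q0 HL HUL ltac:(lra) ltac:(lra) ltac:(lra)). lra.
        + pose proof (Fq_incr L U l q0 (q0 + eps) HL HUL ltac:(lra) ltac:(lra) ltac:(lra)). lra. }
    assert (Prf : forall a, q l (Lam-1) <= a <= q l (Lam+1) -> derivable_pt (Fq L U) a).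
    { intros a Ha. exists (dFq L U a). apply Fq_deriv. apply (sin_nz L l); auto.
      destruct (Hq l (Lam-1) Hl), (Hq l (Lam+1) Hl). lra. }
    assert (Hinc : q l (Lam-1) <= q l Lam <= q l (Lam+1)) by (split; apply Hmono; auto; lra).
    assert (Hd : derive_pt (Fq L U) (q l Lam) (Prf (q l Lam) Hinc) = dFq L U (q l Lam)).
    { apply derive_pt_eq_0. apply Fq_deriv. apply (sin_nz L l); auto. }
    assert (Hdp : 0 < dFq L U (q l Lam)) by (apply dFq_pos; auto; apply (sin_nz L l); auto).
    exists (1 / derive_pt (Fq L U) (q l Lam) (Prf (q l Lam) Hinc)). split.
    * apply (derivable_pt_lim_recip_interv (Fq L U) (q l) (Lam-1) (Lam+1) Lam Prf Hcont); try lra.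
      intros x Hx. unfold comp, id. apply Hq; auto.
    * rewrite Hd. apply Rdiv_lt_0_compat; lra.
  + change (is_lim (q l) m_infty (Finite (aL L l))).
    apply is_lim_spec. intros eps.
    assert (Hab : aL L l < bL L l) by (unfold aL, bL; lra).
    set (z := aL L l + Rmin eps (bL L l - aL L l) / 2).
    assert (Hm0 : 0 < Rmin eps (bL L l - aL L l)) by (apply Rmin_glb_lt; [apply cond_pos|lra]).
    assert (Hm1 := Rmin_l eps (bL L l - aL L l)). assert (Hm2 := Rmin_r eps (bL L l - aL L l)).
    exists (Fq L U z). intros x Hx.
    assert (Hz : aL L l < z < bL L l) by (unfold z; lra).
    assert (H1 : q l x <= z) by (apply Hhi; auto; lra).
    destruct (Hq l x Hl) as [H2 _].
    rewrite Rabs_right by lra. unfold z in H1. lra.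
  + change (is_lim (q l) p_infty (Finite (bL L l))).
    apply is_lim_spec. intros eps.
    assert (Hab : aL L l < bL L l) by (unfold aL, bL; lra).
    set (z := bL L l - Rmin eps (bL L l - aL L l) / 2).
    assert (Hm0 : 0 < Rmin eps (bL L l - aL L l)) by (apply Rmin_glb_lt; [apply cond_pos|lra]).
    assert (Hm1 := Rmin_l eps (bL L l - aL L l)). assert (Hm2 := Rmin_r eps (bL L l - aL L l)).
    exists (Fq L U z). intros x Hx.
    assert (Hz : aL L l < z < bL L l) by (unfold z; lra).
    assert (H1 : z <= q l x) by (apply Hlo; auto; lra).
    destruct (Hq l x Hl) as [H2 _].
    rewrite Rabs_left by lra. unfold z in H1. lra.
Qed.
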